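(* Let $G$ be a finite nested group with chain of centers $G=X_0>X_1>\dots>X_n\ge1$, let $N$ be a normal subgroup of $G$, and let $1\le i\le n$. Then there exists $\chi\in\mathrm{Irr}(G/N)$ (viewed as a character of $G$) with $Z(\chi)=X_i$ if and only if $N[X_i,G]<N[X_{i-1},G]$.
   Context: For $\chi\in\mathrm{Irr}(G)$, $Z(\chi)=\{g\in G: |\chi(g)|=\chi(1)\}$. $G$ is nested if for all $\chi,\psi\in\mathrm{Irr}(G)$ either $Z(\chi)\le Z(\psi)$ or $Z(\psi)\le Z(\chi)$; then the distinct subgroups $Z(\chi)$, $\chi\in\mathrm{Irr}(G)$, form a chain $G=X_0>X_1>\dots>X_n\ge1$, the chain of centers. *)

(* Defs.v *)
From HB Require Import structures.
From mathcomp Require Import all_boot all_order all_algebra all_fingroup all_solvable all_field all_character.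
Set Implicit Arguments. Unset Strict Implicit. Unset Printing Implicit Defensive.
Import GroupScope.
Local Open Scope ring_scope.

(* Z(chi) = {g in G : |chi g| = chi 1}, i.e. MathComp's 'Z(chi)%CF for chi in Irr(G). *)
Definition nested (gT : finGroupType) (G : {group gT}) : Prop :=
  forall i j : Iirr G,
    ('Z('chi_i) \subset 'Z('chi_j))%CF \/ ('Z('chi_j) \subset 'Z('chi_i))%CF.

Definition center_chain (gT : finGroupType) (G : {group gT})
    (X : nat -> {set gT}) (n : nat) : Prop :=
  [/\ X 0 = G,
      (forall k, k < n -> X k.+1 \proper X k)%N,
      (forall i : Iirr G, exists2 k, (k <= n)%N & 'Z('chi_i)%CF = X k)
    & (forall k, k <= n -> exists i : Iirr G, 'Z('chi_i)%CF = X k)%N].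

(* Main.v *)
Require Import Defs.
From HB Require Import structures.
From mathcomp Require Import all_boot all_order all_algebra all_fingroup all_solvable all_field all_character.
Import GroupScope.
Local Open Scope ring_scope.

Lemma key_center (gT : finGroupType) (G : {group gT}) (i : Iirr G) (A : {set gT}) :
  A \subset G -> (A \subset 'Z('chi_i)%CF) = ([~: A, G] \subset cfker 'chi_i).
Proof.
move=> sAG.
have nKG : G \subset 'N(cfker 'chi_i) by exact: normal_norm (cfker_normal _).
have nKA : A \subset 'N(cfker 'chi_i) by exact: subset_trans nKG.
have sKZ : cfker 'chi_i \subset 'Z('chi_i)%CF by exact: normal_sub (cfker_center_normal _).
apply/idP/idP => H.
  rewrite -quotient_cents2 //.
  apply: subset_trans (quotientS _ H) _.
  apply: subset_trans (cfcenter_subset_center _) _.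
  exact: subsetIr.
rewrite -(quotientSGK nKA sKZ) cfcenter_eq_center subsetI quotientS //=.
by rewrite quotient_cents2.
Qed.

Lemma chain_mono (gT : finGroupType) (G : {group gT}) (X : nat -> {set gT}) n :
  center_chain G X n -> forall k l, (k <= l <= n)%N -> X l \subset X k.
Proof.
case=> _ Hp _ _ k l; elim: l => [|l IH].
  by rewrite leqn0 => /andP[/eqP-> _].
case/andP=> kl ln; rewrite leq_eqVlt in kl; case/orP: kl => [/eqP->//|kl].
apply: subset_trans (proper_sub (Hp l ln)) (IH _).
by rewrite -ltnS kl /= ltnW.
Qed.

Theorem lemma2p8 (gT : finGroupType) (G N : {group gT})
    (X : nat -> {set gT}) (n i : nat) :
  nested G -> center_chain G X n -> N <| G -> (1 <= i <= n)%N ->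
  (exists j : Iirr (G / N), 'Z(('chi_j %% N)%CF)%CF = X i)
  <-> ((N * [~: X i, G]) \proper (N * [~: X i.-1, G]))%g.
Proof.
move=> _ Hc nsNG /andP[i1 iN].
have Hc' := Hc; case: Hc' => X0 Hp Hall Hex.
have mono := @chain_mono _ _ _ _ Hc.
have XG k : (k <= n)%N -> X k \subset G.
  by case/Hex=> t <-; exact: cfcenter_sub.
have iN' : (i.-1 <= n)%N by apply: leq_trans (leq_pred _) iN.
have Hprop : X i \proper X i.-1 by rewrite -{1}(prednK i1); apply: Hp; rewrite prednK.
have sub1 : X i \subset X i.-1 by exact: proper_sub.
have [sNG nNG] := andP nsNG.
split.
  case=> j Zj; set t := mod_Iirr j.
  have Et : 'chi_t = ('chi_j %% N)%CF by rewrite mod_IirrE.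
  have NK : N \subset cfker 'chi_t by rewrite Et cfker_mod.
  rewrite properEneq mulgS ?commgSS // andbT.
  apply/negP => /eqP E.
  have RK : [~: X i, G] \subset cfker 'chi_t by rewrite -key_center ?XG // Et Zj.
  have : [~: X i.-1, G] \subset cfker 'chi_t.
    apply: subset_trans (mulG_subr N _) _.
    by rewrite -E mul_subG.
  rewrite -key_center ?XG // Et Zj => H.
  by move: Hprop; rewrite properE H andbF.
move=> Hpr.
have nsC : [~: X i, G] <| G.
  have [t Et] := Hex i iN.
  rewrite -Et; have := commg_normal ('Z('chi_t)%CF)%G G.
  by rewrite (joing_idPr (cfcenter_sub _)).
set H := (N <*> [~: X i, G])%G.
have nsH : H <| G by apply: normalY.
have EH : (H : {set gT}) = (N * [~: X i, G])%g.
  by rewrite /= norm_joinEr // (subset_trans (normal_sub nsC)).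
have notsub : ~~ ([~: X i.-1, G] \subset H).
  apply/negP => S; move: Hpr; rewrite properE; case/andP=> _ /negP; apply.
  by rewrite -EH mul_subG // EH mulG_subl.
have [k Hk Kk] : exists2 k : Iirr G, H \subset cfker 'chi_k &
    ~~ ([~: X i.-1, G] \subset cfker 'chi_k).
  apply/exists_inP; apply: contraNT notsub; rewrite negb_exists_in => /forall_inP F.
  rewrite -{1}(cap_cfker_normal nsH).
  by apply/bigcapsP => k /F; rewrite negbK.
have NK : N \subset cfker 'chi_k by apply: subset_trans Hk; rewrite EH mulG_subl.
exists (quo_Iirr N k); rewrite -mod_IirrE // quo_IirrK //.
have [m mn Zm] := Hall k.
have Xi_sub : X i \subset X m.
  rewrite -Zm key_center ?XG //; apply: subset_trans Hk.
  by rewrite EH mulG_subr.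
have notXi1 : ~~ (X i.-1 \subset X m) by rewrite -Zm key_center ?XG.
rewrite Zm; apply/eqP; rewrite eqEsubset Xi_sub andbT.
case: (leqP i m) => im; first by apply: mono; rewrite im mn.
have ml : (m <= i.-1 <= n)%N by rewrite iN' andbT; move: im i1; case: (i).
by move: notXi1; rewrite (mono _ _ ml).
Qed.
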